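(* Let $\eta=10^{-4}$. There exist absolute constants $c_0,c_1,c_2>0$ such that the following holds for all integers $K\ge1$ and all $\epsilon$ with $c_0/K\le\epsilon\le c_1$. Let $n=2K$, and let $\mathcal F$ be the family of instances with $n$ arms in which every arm is a Bernoulli arm with mean in $\{1/2-\eta,\,1/2+\eta\}$. If an algorithm, on every instance in $\mathcal F$, outputs an $\epsilon$-top-$K$ set of arms with probability at least $0.9$, then there is an instance in $\mathcal F$ on which the expected number of pulls made by the algorithm is at least $c_2\, n\log(1/\epsilon)$.
   Context: Stochastic bandit model: arm $i$ has an unknown reward distribution with mean $\theta_i$; an algorithm adaptively pulls arms, each pull of arm $i$ giving an independent sample from its distribution, and finally outputs a set of arms. With arms indexed so that $\theta_1\ge\dots\ge\theta_n$, for $T\subseteq[n]$ with $|T|=K$ the aggregate regret is $\mathcal R_T=\frac1K(\sum_{i=1}^K\theta_i-\sum_{i\in T}\theta_i)$, and $T$ is an $\epsilon$-top-$K$ set if $|T|=K$ and $\mathcal R_T\le\epsilon$. *)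

(* Defs.v *)
From Stdlib Require Import Reals List Arith.
Import ListNotations.
Open Scope R_scope.

(** A history is a list of (arm, outcome) pairs, MOST RECENT PULL FIRST.
    An algorithm is a behavioural policy: after each history it either pulls
    arm i (probability [pull h i]) or stops and outputs a set of arms,
    encoded as a boolean indicator vector S of length n (probability
    [out h S]). *)

Definition hist := list (nat * bool).

Record policy := mkPolicy {
  pull : hist -> nat -> R;
  out  : hist -> list bool -> R }.

Definition sumR (l : list R) : R := fold_right Rplus 0 l.

Fixpoint allvec (n : nat) : list (list bool) :=
  match n with
  | O => [[]]
  | S m => flat_map (fun v => [true :: v; false :: v]) (allvec m)
  end.

Fixpoint hist_all (n m : nat) : list hist :=
  match m with
  | O => [[]]
  | S m' => flat_map (fun h => flat_map (fun i => [(i, true) :: h; (i, false) :: h])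
                                        (seq 0 n))
                     (hist_all n m')
  end.

Definition valid_policy (n : nat) (pol : policy) : Prop :=
  forall h : hist,
    (forall i, 0 <= pull pol h i) /\
    (forall S, 0 <= out pol h S) /\
    sumR (map (pull pol h) (seq 0 n)) + sumR (map (out pol h) (allvec n)) = 1.

(** probability that the run starts with history h (instance theta,
    arm i gives outcome true with probability theta i) *)
Fixpoint hprob (theta : nat -> R) (pol : policy) (h : hist) : R :=
  match h with
  | [] => 1
  | (i, b) :: h' =>
      hprob theta pol h' * pull pol h' i * (if b then theta i else 1 - theta i)
  end.

Fixpoint set_sum (theta : nat -> R) (j : nat) (S : list bool) : R :=
  match S with
  | [] => 0
  | b :: S' => (if b then theta j else 0) + set_sum theta (Datatypes.S j) S'
  end.

Definition card (S : list bool) : nat := count_occ Bool.bool_dec S true.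

(** sum of the K largest means theta_1 + ... + theta_K
    (= maximum of the sum over K-subsets of the n arms; K <= n assumed) *)
Definition topK_sum (theta : nat -> R) (n K : nat) : R :=
  fold_right Rmax 0
    (map (set_sum theta 0) (filter (fun S => Nat.eqb (card S) K) (allvec n))).

Definition regret (theta : nat -> R) (n K : nat) (S : list bool) : R :=
  / INR K * (topK_sum theta n K - set_sum theta 0 S).

Definition eps_topK (theta : nat -> R) (n K : nat) (eps : R) (S : list bool) : Prop :=
  card S = K /\ regret theta n K S <= eps.

Definition eps_topKb (theta : nat -> R) (n K : nat) (eps : R) (S : list bool) : bool :=
  Nat.eqb (card S) K && (if Rle_dec (regret theta n K S) eps then true else false).

(** P(algorithm stops after exactly m pulls with an eps-top-K output) *)
Definition succ_at (theta : nat -> R) (pol : policy) (n K : nat) (eps : R) (m : nat) : R :=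
  sumR (map (fun h => hprob theta pol h *
                      sumR (map (fun S => if eps_topKb theta n K eps S then out pol h S else 0)
                                (allvec n)))
            (hist_all n m)).

(** P(number of pulls >= m)  (non-terminating runs count as infinitely many) *)
Definition reach (theta : nat -> R) (pol : policy) (n m : nat) : R :=
  sumR (map (hprob theta pol) (hist_all n m)).

(** P(output is an eps-top-K set) >= p  (sup of partial sums of a
    nonnegative series is >= p) *)
Definition success_prob_ge (theta : nat -> R) (pol : policy) (n K : nat) (eps p : R) : Prop :=
  forall b, b < p -> exists M, b < sum_f_R0 (succ_at theta pol n K eps) M.

(** E[number of pulls] = sum_{m>=1} P(N >= m) >= B  (possibly +infinity) *)
Definition expected_pulls_ge (theta : nat -> R) (pol : policy) (n : nat) (B : R) : Prop :=
  forall b, b < B -> exists M, b < sum_f_R0 (fun m => reach theta pol n (S m)) M.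

Definition eta : R := / 10000.

Definition in_family (n : nat) (theta : nat -> R) : Prop :=
  forall i, (i < n)%nat -> theta i = 1/2 - eta \/ theta i = 1/2 + eta.

(* Main.v *)
Require Import Defs.
From Stdlib Require Import Reals List Arith Lra Lia Classical Bool ZArith.
Import ListNotations.
Open Scope R_scope.


Lemma sumR_app l1 l2 : sumR (l1 ++ l2) = sumR l1 + sumR l2.
Proof. induction l1; simpl; [ring| rewrite IHl1; ring]. Qed.

Lemma sumR_plus {A} (f g : A -> R) l :
  sumR (map (fun x => f x + g x) l) = sumR (map f l) + sumR (map g l).
Proof. induction l; simpl; [ring| rewrite IHl; ring]. Qed.

Lemma sumR_scal {A} (c : R) (f : A -> R) l :
  sumR (map (fun x => c * f x) l) = c * sumR (map f l).
Proof. induction l; simpl; [ring| rewrite IHl; ring]. Qed.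

Lemma sumR_le {A} (f g : A -> R) l :
  (forall x, In x l -> f x <= g x) -> sumR (map f l) <= sumR (map g l).
Proof.
  induction l; simpl; intros H; [lra|].
  assert (f a <= g a) by auto. assert (sumR (map f l) <= sumR (map g l)) by auto. lra.
Qed.

Lemma sumR_ext {A} (f g : A -> R) l :
  (forall x, In x l -> f x = g x) -> sumR (map f l) = sumR (map g l).
Proof.
  induction l; simpl; intros H; [lra|].
  rewrite H by auto. rewrite IHl by auto. reflexivity.
Qed.

Lemma sumR_nonneg {A} (f : A -> R) l :
  (forall x, In x l -> 0 <= f x) -> 0 <= sumR (map f l).
Proof.
  intros H. replace 0 with (sumR (map (fun _ => 0) l)).
  - apply sumR_le; auto.
  - induction l; simpl; auto. rewrite IHl; [ring| intros; apply H; simpl; auto].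
Qed.

Lemma sumR_flat_map {A B} (f : B -> R) (g : A -> list B) l :
  sumR (map f (flat_map g l)) = sumR (map (fun x => sumR (map f (g x))) l).
Proof. induction l; simpl; auto. rewrite map_app, sumR_app, IHl. reflexivity. Qed.

Lemma sumR_swap {A B} (F : A -> B -> R) l1 l2 :
  sumR (map (fun x => sumR (map (fun y => F x y) l2)) l1) =
  sumR (map (fun y => sumR (map (fun x => F x y) l1)) l2).
Proof.
  induction l1; simpl.
  - induction l2; simpl; auto. rewrite <- IHl2; ring.
  - rewrite IHl1. rewrite <- sumR_plus. reflexivity.
Qed.

Lemma sumR_const_le {A} (f : A -> R) c l :
  (forall x, In x l -> c <= f x) -> INR (length l) * c <= sumR (map f l).
Proof.
  induction l; intros H.
  - simpl. lra.
  - change (length (a::l)) with (S (length l)). rewrite S_INR.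
    change (sumR (map f (a::l))) with (f a + sumR (map f l)).
    assert (c <= f a) by (apply H; simpl; auto).
    assert (INR (length l) * c <= sumR (map f l)) by (apply IHl; intros; apply H; simpl; auto).
    lra.
Qed.

Lemma sumR_lt_const {A} (f : A -> R) c l :
  l <> [] -> (forall x, In x l -> f x < c) -> sumR (map f l) < INR (length l) * c.
Proof.
  induction l; intros Hne H; [congruence|].
  change (length (a::l)) with (S (length l)). rewrite S_INR.
  change (sumR (map f (a::l))) with (f a + sumR (map f l)).
  assert (f a < c) by (apply H; simpl; auto).
  destruct l as [|b l'].
  - simpl. lra.
  - assert (sumR (map f (b::l')) < INR (length (b::l')) * c)
      by (apply IHl; [congruence| intros; apply H; simpl; auto]). lra.
Qed.

Lemma sumR_exists {A} (f : A -> R) c l :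
  l <> [] -> INR (length l) * c <= sumR (map f l) -> exists x, In x l /\ c <= f x.
Proof.
  intros Hne H. destruct (Classical_Prop.classic (exists x, In x l /\ c <= f x)) as [E|E]; auto.
  exfalso. assert (sumR (map f l) < INR (length l) * c); [|lra].
  apply sumR_lt_const; auto. intros x Hx. destruct (Rlt_le_dec (f x) c); auto.
  exfalso; apply E; eauto.
Qed.


Definition pv (b:bool) : R := if b then 1/2 + eta else 1/2 - eta.
Definition thv (v : list bool) (i:nat) : R := pv (nth i v false).

Fixpoint lprod (f : nat -> bool -> R) (v : list bool) : R :=
  match v with [] => 1 | b::v' => f 0%nat b * lprod (fun k => f (S k)) v' end.
Fixpoint prodn (f : nat -> bool -> R) (n:nat) : R :=
  match n with 0%nat => 1 | S n' => (f 0%nat true + f 0%nat false) * prodn (fun k => f (S k)) n' end.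

Lemma lprod_factorize n : forall f, sumR (map (lprod f) (allvec n)) = prodn f n.
Proof.
  induction n; intros f.
  - simpl. ring.
  - simpl allvec. rewrite sumR_flat_map. simpl prodn.
    rewrite <- (IHn (fun k => f (S k))).
    rewrite <- sumR_scal. apply sumR_ext. intros v _. simpl. ring.
Qed.

Lemma lprod_ext v : forall f g, (forall k b, f k b = g k b) -> lprod f v = lprod g v.
Proof.
  induction v; intros f g H; simpl; auto.
  rewrite H. f_equal. apply IHv. intros; apply H.
Qed.

Lemma lprod_one v : forall f, (forall k b, f k b = 1) -> lprod f v = 1.
Proof. induction v; intros f H; simpl; auto. rewrite H, IHv; auto. ring. Qed.

Lemma lprod_mult v : forall f g, lprod (fun k b => f k b * g k b) v = lprod f v * lprod g v.
Proof.
  induction v; intros f g; simpl; [ring|].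
  rewrite (IHv (fun k => f (S k)) (fun k => g (S k))). ring.
Qed.

Lemma lprod_factor v : forall i F c, (i < length v)%nat ->
  lprod (fun k b => F k b * (if Nat.eqb k i then c b else 1)) v = lprod F v * c (nth i v false).
Proof.
  induction v as [|b v IH]; intros i F c Hi; simpl in Hi; [lia|].
  destruct i as [|i].
  - simpl. rewrite (lprod_ext v _ (fun k => F (S k))).
    + ring.
    + intros; simpl; ring.
  - simpl. rewrite (IH i (fun k => F (S k)) c) by lia. ring.
Qed.

Fixpoint Wt (h:hist) (k:nat) (b:bool) : R :=
  match h with [] => 1
  | (i,o)::h' => Wt h' k b * (if Nat.eqb k i then (if o then pv b else 1 - pv b) else 1) end.
Fixpoint Ah (pol : policy) (h:hist) : R :=
  match h with [] => 1 | (i,o)::h' => Ah pol h' * pull pol h' i end.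

Lemma hprob_fact pol v h : Forall (fun e => (fst e < length v)%nat) h ->
  hprob (thv v) pol h = Ah pol h * lprod (Wt h) v.
Proof.
  induction h as [|[i o] h IH]; intros HF.
  - simpl. rewrite lprod_one by auto. ring.
  - inversion HF; subst. simpl fst in *. simpl hprob. rewrite IH by auto.
    simpl Ah.
    rewrite (lprod_ext v (Wt ((i,o)::h))
      (fun k b => Wt h k b * (if Nat.eqb k i then (if o then pv b else 1 - pv b) else 1)))
      by (intros; reflexivity).
    rewrite lprod_factor by auto. unfold thv. destruct o; ring.
Qed.

Lemma allvec_len n v : In v (allvec n) -> length v = n.
Proof.
  revert v; induction n; intros v H; simpl in H.
  - destruct H as [<-|[]]; auto.
  - apply in_flat_map in H. destruct H as [w [Hw H]].
    simpl in H. destruct H as [<-|[<-|[]]]; simpl; f_equal; auto.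
Qed.

Lemma allvec_in n v : length v = n -> In v (allvec n).
Proof.
  revert v; induction n; intros v H.
  - destruct v; simpl in *; try lia; auto.
  - destruct v as [|b v]; simpl in H; [lia|]. simpl. apply in_flat_map.
    exists v. split; [apply IHn; lia|]. destruct b; simpl; auto.
Qed.

Lemma hist_all_prop n m h : In h (hist_all n m) ->
  length h = m /\ Forall (fun e => (fst e < n)%nat) h.
Proof.
  revert h; induction m; intros h H; simpl in H.
  - destruct H as [<-|[]]; auto.
  - apply in_flat_map in H. destruct H as [h' [Hh' H]].
    apply in_flat_map in H. destruct H as [i [Hi H]].
    apply in_seq in Hi. destruct (IHm h' Hh') as [L F].
    simpl in H. destruct H as [<-|[<-|[]]]; simpl; split; auto; constructor; simpl; auto; lia.
Qed.


Definition stop theta pol n m :=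
  sumR (map (fun h => hprob theta pol h * sumR (map (out pol h) (allvec n))) (hist_all n m)).

Section S.
Variables (theta : nat -> R) (pol : policy) (n : nat).
Hypothesis Hval : valid_policy n pol.
Hypothesis Hth : forall i, 0 <= theta i <= 1.

Lemma hprob_nonneg h : 0 <= hprob theta pol h.
Proof.
  induction h as [|[i o] h IH]; simpl; [lra|].
  destruct (Hval h) as [Hp _]. specialize (Hp i). specialize (Hth i).
  apply Rmult_le_pos; [apply Rmult_le_pos; auto|]. destruct o; lra.
Qed.

Lemma stop_nonneg m : 0 <= stop theta pol n m.
Proof.
  apply sumR_nonneg. intros h _. apply Rmult_le_pos; [apply hprob_nonneg|].
  apply sumR_nonneg. intros S _. destruct (Hval h) as [_ [Ho _]]. auto.
Qed.

Lemma reach_step m : reach theta pol n m = reach theta pol n (S m) + stop theta pol n m.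
Proof.
  unfold reach, stop. simpl hist_all. rewrite sumR_flat_map.
  rewrite <- sumR_plus. apply sumR_ext. intros h _.
  rewrite sumR_flat_map.
  rewrite (sumR_ext _ (fun i => hprob theta pol h * pull pol h i)).
  2:{ intros i _. simpl. ring. }
  rewrite sumR_scal. destruct (Hval h) as [_ [_ E]].
  rewrite <- Rmult_plus_distr_l, E. ring.
Qed.

Lemma stop_seq k : forall a,
  sumR (map (stop theta pol n) (seq a k)) + reach theta pol n (a + k) = reach theta pol n a.
Proof.
  induction k; intros a; simpl.
  - rewrite Nat.add_0_r. ring.
  - rewrite (reach_step a). rewrite <- (IHk (S a)). replace (a + S k)%nat with (S a + k)%nat by lia. ring.
Qed.

Lemma reach_nonneg m : 0 <= reach theta pol n m.
Proof. apply sumR_nonneg. intros; apply hprob_nonneg. Qed.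

Lemma reach_mono a k : reach theta pol n (a + k) <= reach theta pol n a.
Proof.
  rewrite <- (stop_seq k a). assert (0 <= sumR (map (stop theta pol n) (seq a k))).
  { apply sumR_nonneg; intros; apply stop_nonneg. } lra.
Qed.

Lemma succ_le_stop K eps m : 0 <= succ_at theta pol n K eps m <= stop theta pol n m.
Proof.
  unfold succ_at, stop. split.
  - apply sumR_nonneg. intros h _. apply Rmult_le_pos; [apply hprob_nonneg|].
    apply sumR_nonneg. intros S _. destruct (eps_topKb theta n K eps S); [|lra].
    destruct (Hval h) as [_ [Ho _]]; auto.
  - apply sumR_le. intros h _. apply Rmult_le_compat_l; [apply hprob_nonneg|].
    apply sumR_le. intros S _. destruct (eps_topKb theta n K eps S); [lra|].
    destruct (Hval h) as [_ [Ho _]]; auto.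
Qed.

Lemma succ_partial K eps M N :
  sumR (map (succ_at theta pol n K eps) (seq 0 N)) <=
  sumR (map (succ_at theta pol n K eps) (seq 0 M)) + reach theta pol n M.
Proof.
  assert (Hr := reach_nonneg M).
  destruct (Nat.le_gt_cases N M) as [H|H].
  - replace M with (N + (M - N))%nat by lia. rewrite seq_app, map_app, sumR_app.
    assert (0 <= sumR (map (succ_at theta pol n K eps) (seq (0 + N) (M - N)))).
    { apply sumR_nonneg; intros; apply succ_le_stop. }
    replace (N + (M - N))%nat with M by lia. lra.
  - replace N with (M + (N - M))%nat by lia. rewrite seq_app, map_app, sumR_app.
    assert (sumR (map (succ_at theta pol n K eps) (seq (0 + M) (N - M))) <=
            sumR (map (stop theta pol n) (seq (0 + M) (N - M)))).
    { apply sumR_le; intros; apply succ_le_stop. }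
    assert (Hs := stop_seq (N - M) (0 + M)).
    assert (0 <= reach theta pol n (0 + M + (N - M))) by apply reach_nonneg.
    simpl in *. lra.
Qed.

End S.

Lemma sum_f_R0_seq f N : sum_f_R0 f N = sumR (map f (seq 0 (S N))).
Proof.
  induction N; [simpl; ring|]. change (sum_f_R0 f (S N)) with (sum_f_R0 f N + f (S N)).
  rewrite IHN. rewrite (seq_S (S N) 0), map_app, sumR_app. simpl (map f [(0 + S N)%nat]).
  cbn [sumR fold_right]. replace (0 + S N)%nat with (S N) by lia. ring.
Qed.


Fixpoint lowIn (S v : list bool) : nat :=
  match S, v with s::S', x::v' => ((if s && negb x then 1 else 0) + lowIn S' v')%nat | _, _ => 0%nat end.
Fixpoint highOut (S v : list bool) : nat :=
  match S, v with s::S', x::v' => ((if negb s && x then 1 else 0) + highOut S' v')%nat | _, _ => 0%nat end.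
Fixpoint sumv (S v : list bool) : R :=
  match S, v with s::S', x::v' => (if s then pv x else 0) + sumv S' v' | _, _ => 0 end.

Fixpoint swp (a b : nat) (S v : list bool) : list bool :=
  match S, v with
  | s::S', x::v' =>
     if s && negb x then
       (match a with 0%nat => s :: swp a b S' v' | S a' => false :: swp a' b S' v' end)
     else if negb s && x then
       (match b with 0%nat => s :: swp a b S' v' | S b' => true :: swp a b' S' v' end)
     else s :: swp a b S' v'
  | _, _ => S end.

Lemma card_cons s S : card (s :: S) = ((if s then 1 else 0) + card S)%nat.
Proof. unfold card. destruct s; simpl; auto. Qed.

Lemma swp_prop S : forall v a b, length S = length v ->
  (a <= lowIn S v)%nat -> (b <= highOut S v)%nat ->
  length (swp a b S v) = length S /\ (card (swp a b S v) + a = card S + b)%nat /\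
  sumv (swp a b S v) v + INR a * (1/2 - eta) = sumv S v + INR b * (1/2 + eta).
Proof.
  induction S as [|s S IH]; intros v a b Hl Ha Hb.
  - destruct v; simpl in *; try lia. destruct a; destruct b; simpl in *; try lia. split; auto. split; auto. simpl. ring.
  - destruct v as [|x v]; simpl in Hl; [lia|].
    destruct s, x, a, b; cbn [swp lowIn highOut sumv andb negb length] in *;
    repeat match goal with
    | |- context [swp ?a' ?b' S v] =>
        let H := fresh in
        destruct (IH v a' b') as (H1 & H2 & H3); [lia|lia|lia|]
    end;
    rewrite ?card_cons; (split; [cbn [length]; lia|]); (split; [lia|]);
    rewrite ?S_INR in *; unfold pv in *; lra.
Qed.

Lemma set_sum_sumv S : forall v j th, length S = length v ->
  (forall k, th (j + k)%nat = pv (nth k v false)) -> set_sum th j S = sumv S v.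
Proof.
  induction S as [|s S IH]; intros v j th Hl Hth; destruct v as [|x v]; simpl in Hl; try lia; simpl; auto.
  rewrite (IH v (Datatypes.S j) th) by (try lia; intros k; replace (Datatypes.S j + k)%nat with (j + Datatypes.S k)%nat by lia; rewrite Hth; reflexivity).
  specialize (Hth 0%nat). rewrite Nat.add_0_r in Hth. simpl in Hth. rewrite Hth. reflexivity.
Qed.

Lemma fold_Rmax_ge l x : In x l -> x <= fold_right Rmax 0 l.
Proof.
  induction l; simpl; intros H; [contradiction|]. destruct H as [<-|H].
  - apply Rmax_l.
  - eapply Rle_trans; [apply IHl; auto| apply Rmax_r].
Qed.

Lemma topK_ge v S n K : length v = n -> length S = n -> card S = K ->
  set_sum (thv v) 0 S + 2 * eta * INR (Nat.min (lowIn S v) (highOut S v)) <= topK_sum (thv v) n K.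
Proof.
  intros Hv HS Hc. set (k0 := Nat.min (lowIn S v) (highOut S v)).
  destruct (swp_prop S v k0 k0) as (L1 & L2 & L3); [lia| unfold k0; lia| unfold k0; lia|].
  unfold topK_sum.
  assert (E : set_sum (thv v) 0 (swp k0 k0 S v) = set_sum (thv v) 0 S + 2 * eta * INR k0).
  { rewrite !(set_sum_sumv _ v 0 (thv v)) by (try lia; intros; reflexivity). lra. }
  rewrite <- E. apply fold_Rmax_ge. apply in_map. apply filter_In. split.
  - apply allvec_in. lia.
  - apply Nat.eqb_eq. lia.
Qed.

Lemma good_bound v S n K eps : length v = n -> length S = n -> (0 < K)%nat ->
  eps_topKb (thv v) n K eps S = true ->
  card S = K /\ 2 * eta * INR (Nat.min (lowIn S v) (highOut S v)) <= eps * INR K.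
Proof.
  intros Hv HS HK H. unfold eps_topKb in H. apply andb_prop in H. destruct H as [H1 H2].
  apply Nat.eqb_eq in H1. split; auto.
  destruct (Rle_dec (regret (thv v) n K S) eps) as [Hr|]; [|discriminate].
  pose proof (topK_ge v S n K Hv HS H1). unfold regret in Hr.
  assert (0 < INR K) by (apply lt_0_INR; auto).
  set (d := topK_sum (thv v) n K - set_sum (thv v) 0 S) in *.
  assert (d <= eps * INR K).
  { apply (Rmult_le_reg_l (/ INR K)); [apply Rinv_0_lt_compat; auto|].
    rewrite <- Rmult_assoc, (Rmult_comm _ eps), Rmult_assoc, Rinv_l by lra. lra. }
  unfold d in *. lra.
Qed.


Fixpoint cntn (P : nat -> bool) (n:nat) : nat :=
  match n with 0%nat => 0%nat | S n' => ((if P 0%nat then 1 else 0) + cntn (fun k => P (S k)) n')%nat end.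
Fixpoint sumk (f : nat -> nat) (n:nat) : nat :=
  match n with 0%nat => 0%nat | S n' => (f 0%nat + sumk (fun k => f (S k)) n')%nat end.
Fixpoint prodk (f : nat -> R) (n:nat) : R :=
  match n with 0%nat => 1 | S n' => f 0%nat * prodk (fun k => f (S k)) n' end.

Lemma cntn_ext n : forall P Q, (forall k, (k < n)%nat -> P k = Q k) -> cntn P n = cntn Q n.
Proof.
  induction n; intros P Q H; simpl; auto. rewrite H by lia.
  rewrite (IHn (fun k => P (S k)) (fun k => Q (S k))); auto. intros; apply H; lia.
Qed.

Lemma cntn_split n : forall P Q,
  cntn P n = (cntn (fun k => P k && Q k) n + cntn (fun k => P k && negb (Q k)) n)%nat.
Proof.
  induction n; intros P Q; simpl; auto.
  rewrite (IHn (fun k => P (S k)) (fun k => Q (S k))).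
  destruct (P 0%nat), (Q 0%nat); simpl; lia.
Qed.

Lemma cntn_mono n : forall P Q, (forall k, P k = true -> Q k = true) -> (cntn P n <= cntn Q n)%nat.
Proof.
  induction n; intros P Q H; simpl; auto.
  specialize (IHn (fun k => P (S k)) (fun k => Q (S k)) (fun k => H (S k))).
  destruct (P 0%nat) eqn:E; [rewrite (H _ E)|destruct (Q 0%nat)]; lia.
Qed.

Lemma cntn_compl n : forall P, (cntn P n + cntn (fun k => negb (P k)) n)%nat = n.
Proof.
  induction n; intros P; simpl; auto. specialize (IHn (fun k => P (S k))).
  destruct (P 0%nat); simpl; lia.
Qed.

Lemma card_cntn S : card S = cntn (fun k => nth k S false) (length S).
Proof.
  induction S as [|s S IH]; simpl; auto. rewrite <- IH. rewrite card_cons. destruct s; lia.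
Qed.

Lemma cntn_sumk n : forall L f, (cntn (fun k => Nat.ltb L (f k)) n * (L + 1) <= sumk f n)%nat.
Proof.
  induction n; intros L f; simpl; auto.
  specialize (IHn L (fun k => f (S k))). destruct (Nat.ltb L (f 0%nat)) eqn:E.
  - apply Nat.ltb_lt in E. nia.
  - lia.
Qed.

Fixpoint Tc (h : hist) (k : nat) : nat :=
  match h with [] => 0%nat | (i,_)::h' => ((if Nat.eqb k i then 1 else 0) + Tc h' k)%nat end.

Lemma sumk_plus_ind n : forall f i, (i < n)%nat ->
  sumk (fun k => (if Nat.eqb k i then 1 else 0) + f k)%nat n = S (sumk f n).
Proof.
  induction n; intros f i Hi; [lia|]. simpl.
  destruct i as [|i].
  - simpl. reflexivity.
  - simpl. rewrite (IHn (fun k => f (S k)) i) by lia. lia.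
Qed.

Lemma sumk_Tc n h : Forall (fun e => (fst e < n)%nat) h -> sumk (Tc h) n = length h.
Proof.
  induction h as [|[i o] h IH]; intros HF.
  - simpl. clear. assert (forall m, sumk (fun _ => 0%nat) m = 0%nat) by (induction m; simpl; auto). apply H.
  - inversion HF; subst. simpl in *. rewrite <- IH by auto.
    change (Tc ((i,o)::h)) with (fun k => ((if Nat.eqb k i then 1 else 0) + Tc h k)%nat).
    apply sumk_plus_ind. auto.
Qed.

Lemma prodn_prodk n : forall f, prodn f n = prodk (fun k => f k true + f k false) n.
Proof. induction n; intros f; simpl; auto. rewrite IHn. reflexivity. Qed.

Lemma prodk_nonneg n : forall a, (forall k, (k < n)%nat -> 0 <= a k) -> 0 <= prodk a n.
Proof.
  induction n; intros a H; simpl; [lra|]. apply Rmult_le_pos; [apply H; lia|].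
  apply IHn. intros; apply H; lia.
Qed.

Lemma prodk_le n : forall a b rho,
  (forall k, (k < n)%nat -> 0 <= a k /\ a k <= rho k * b k) ->
  prodk a n <= prodk rho n * prodk b n.
Proof.
  induction n; intros a b rho H; simpl; [lra|].
  destruct (H 0%nat) as [H1 H2]; [lia|].
  assert (IH : prodk (fun k => a (S k)) n <= prodk (fun k => rho (S k)) n * prodk (fun k => b (S k)) n).
  { apply IHn. intros k Hk. apply H. lia. }
  assert (0 <= prodk (fun k => a (S k)) n) by (apply prodk_nonneg; intros; apply H; lia).
  replace (rho 0%nat * prodk (fun k => rho (S k)) n * (b 0%nat * prodk (fun k => b (S k)) n))
    with ((rho 0%nat * b 0%nat) * (prodk (fun k => rho (S k)) n * prodk (fun k => b (S k)) n)) by ring.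
  apply Rmult_le_compat; auto.
Qed.

Lemma prodk_cnt n : forall (P : nat -> bool) (q : R), prodk (fun k => if P k then q else 1) n = q ^ (cntn P n).
Proof.
  induction n; intros P q; simpl; auto. rewrite IHn. destruct (P 0%nat); simpl; ring.
Qed.


Definition rr : R := (1/2 + eta) / (1/2 - eta).
Definition dd (L : nat) : R := / (1 + rr ^ L).
Definition qq (L : nat) : R := 1 - dd L * (1 - / exp 1).

Lemma eta_val : eta = / 10000.
Proof. reflexivity. Qed.

Lemma rr_ge1 : 1 <= rr.
Proof. unfold rr; rewrite eta_val. apply (Rmult_le_reg_r (1/2 - /10000)); [lra|].
  unfold Rdiv at 2. rewrite Rmult_assoc, Rinv_l by lra. lra. Qed.

Lemma rr_mul : (1/2 + eta) = rr * (1/2 - eta).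
Proof. unfold rr. field. rewrite eta_val. lra. Qed.

Lemma pv_bounds b : 0 < pv b < 1.
Proof. unfold pv; rewrite eta_val; destruct b; lra. Qed.

Lemma Wt_nonneg h k b : 0 <= Wt h k b.
Proof.
  induction h as [|[i o] h IH]; simpl; [lra|]. apply Rmult_le_pos; auto.
  destruct (Nat.eqb k i); [|lra]. pose proof (pv_bounds b). destruct o; lra.
Qed.

Lemma mul_le_aux a x b y R1 r : 0 <= a -> 0 <= x -> a <= R1 * b -> x <= r * y ->
  a * x <= (R1 * r) * (b * y).
Proof.
  intros. replace (R1 * r * (b * y)) with ((R1 * b) * (r * y)) by ring.
  apply Rmult_le_compat; auto.
Qed.

Lemma Wt_ratio h k : Wt h k true <= rr ^ (Tc h k) * Wt h k false /\
                     Wt h k false <= rr ^ (Tc h k) * Wt h k true.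
Proof.
  pose proof rr_ge1 as Hr. pose proof rr_mul as Hm.
  assert (He : 0 < eta) by (rewrite eta_val; lra).
  induction h as [|[i o] h [IH1 IH2]]; simpl; [lra|].
  destruct (Nat.eqb k i).
  - change (1 + Tc h k)%nat with (S (Tc h k)). simpl pow.
    rewrite (Rmult_comm rr).
    assert (0 <= rr ^ Tc h k) by (apply pow_le; lra).
    split; apply mul_le_aux; auto using Wt_nonneg; unfold pv; destruct o; nra.
  - simpl. rewrite !Rmult_1_r. auto.
Qed.

Lemma unc_bound h k L : (Tc h k <= L)%nat ->
  dd L * (Wt h k true + Wt h k false) <= Wt h k false /\
  dd L * (Wt h k true + Wt h k false) <= Wt h k true.
Proof.
  intros HT. destruct (Wt_ratio h k) as [H1 H2].
  pose proof rr_ge1. assert (rr ^ Tc h k <= rr ^ L) by (apply Rle_pow; auto).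
  assert (0 <= rr ^ Tc h k) by (apply pow_le; lra).
  pose proof (Wt_nonneg h k true). pose proof (Wt_nonneg h k false).
  assert (H1' : Wt h k true <= rr ^ L * Wt h k false) by nra.
  assert (H2' : Wt h k false <= rr ^ L * Wt h k true) by nra.
  assert (Hp : 0 < 1 + rr ^ L) by nra.
  unfold dd. split; apply (Rmult_le_reg_l (1 + rr ^ L)); auto;
  rewrite <- Rmult_assoc, Rinv_r by lra; lra.
Qed.

Definition g1 (S : list bool) (k : nat) (b : bool) : R :=
  if nth k S false && negb b then / exp 1 else 1.
Definition g2 (S : list bool) (k : nat) (b : bool) : R :=
  if negb (nth k S false) && b then / exp 1 else 1.

Lemma lprod_g1 v : forall S, length S = length v -> lprod (g1 S) v = (/ exp 1) ^ (lowIn S v).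
Proof.
  induction v as [|x v IH]; intros S Hl; destruct S as [|s S]; simpl in Hl; try lia; [reflexivity|].
  simpl lprod. rewrite (lprod_ext v _ (g1 S)) by (intros; reflexivity).
  rewrite IH by lia. unfold g1. simpl. destruct s, x; simpl; ring.
Qed.

Lemma lprod_g2 v : forall S, length S = length v -> lprod (g2 S) v = (/ exp 1) ^ (highOut S v).
Proof.
  induction v as [|x v IH]; intros S Hl; destruct S as [|s S]; simpl in Hl; try lia; [reflexivity|].
  simpl lprod. rewrite (lprod_ext v _ (g2 S)) by (intros; reflexivity).
  rewrite IH by lia. unfold g2. simpl. destruct s, x; simpl; ring.
Qed.

Lemma invexp_pow k : (/ exp 1) ^ k = exp (- INR k).
Proof.
  induction k; simpl pow. - simpl. rewrite Ropp_0, exp_0. reflexivity.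
  - rewrite IHk, S_INR, <- exp_Ropp, <- exp_plus. f_equal. ring.
Qed.


Lemma exp1_gt2 : 2 < exp 1.
Proof. pose proof (exp_ineq1 1 ltac:(lra)). lra. Qed.

Lemma invexp_bounds : 0 < / exp 1 < 1/2.
Proof.
  pose proof exp1_gt2. split; [apply Rinv_0_lt_compat; lra|].
  apply (Rmult_lt_reg_l (exp 1)); [lra|]. rewrite Rinv_r by lra. lra.
Qed.

Lemma dd_bounds L : 0 < dd L <= 1.
Proof.
  unfold dd. pose proof rr_ge1. assert (1 <= rr ^ L) by (apply pow_R1_Rle; auto).
  split; [apply Rinv_0_lt_compat; lra|]. rewrite <- Rinv_1. apply Rinv_le_contravar; lra.
Qed.

Lemma qq_bounds L : 0 <= qq L <= 1.
Proof. unfold qq. pose proof (dd_bounds L). pose proof invexp_bounds. nra. Qed.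

Lemma pow_decr q a b : 0 <= q <= 1 -> (a <= b)%nat -> q ^ b <= q ^ a.
Proof.
  intros Hq Hab. replace b with (a + (b - a))%nat by lia. rewrite pow_add.
  assert (0 <= q ^ a) by (apply pow_le; lra).
  assert (q ^ (b - a) <= 1). { induction (b - a)%nat; simpl; [lra|]. nra. }
  assert (0 <= q ^ (b - a)) by (apply pow_le; lra). nra.
Qed.

Lemma Ah_nonneg pol n h : valid_policy n pol -> 0 <= Ah pol h.
Proof.
  intros Hv. induction h as [|[i o] h IH]; simpl; [lra|].
  apply Rmult_le_pos; auto. apply (Hv h).
Qed.

Lemma sum_hprob_g pol n h (g : nat -> bool -> R) :
  Forall (fun e => (fst e < n)%nat) h ->
  sumR (map (fun v => hprob (thv v) pol h * lprod g v) (allvec n)) =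
  Ah pol h * prodn (fun k b => Wt h k b * g k b) n.
Proof.
  intros HF. rewrite <- lprod_factorize, <- sumR_scal. apply sumR_ext. intros v Hv.
  apply allvec_len in Hv. rewrite hprob_fact by (rewrite Hv; auto).
  rewrite lprod_mult. ring.
Qed.

Lemma sum_hprob pol n h :
  Forall (fun e => (fst e < n)%nat) h ->
  sumR (map (fun v => hprob (thv v) pol h) (allvec n)) = Ah pol h * prodn (Wt h) n.
Proof.
  intros HF. rewrite <- lprod_factorize, <- sumR_scal. apply sumR_ext. intros v Hv.
  apply allvec_len in Hv. rewrite hprob_fact by (rewrite Hv; auto). ring.
Qed.

Lemma prodn_Wt_nonneg h n : 0 <= prodn (Wt h) n.
Proof.
  rewrite prodn_prodk. apply prodk_nonneg. intros.
  pose proof (Wt_nonneg h k true). pose proof (Wt_nonneg h k false). lra.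
Qed.

Lemma prod_g1_bound h n L (S : list bool) :
  prodn (fun k b => Wt h k b * g1 S k b) n <=
  qq L ^ (cntn (fun k => nth k S false && Nat.leb (Tc h k) L) n) * prodn (Wt h) n.
Proof.
  rewrite !prodn_prodk, <- prodk_cnt. apply prodk_le. intros k _.
  pose proof (Wt_nonneg h k true) as A. pose proof (Wt_nonneg h k false) as B.
  pose proof invexp_bounds. pose proof (dd_bounds L).
  unfold g1, qq. destruct (nth k S false); simpl.
  - destruct (Nat.leb (Tc h k) L) eqn:E.
    + apply Nat.leb_le in E. destruct (unc_bound h k L E) as [U1 U2]. split; nra.
    + split; nra.
  - split; lra.
Qed.

Lemma prod_g2_bound h n L (S : list bool) :
  prodn (fun k b => Wt h k b * g2 S k b) n <=
  qq L ^ (cntn (fun k => negb (nth k S false) && Nat.leb (Tc h k) L) n) * prodn (Wt h) n.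
Proof.
  rewrite !prodn_prodk, <- prodk_cnt. apply prodk_le. intros k _.
  pose proof (Wt_nonneg h k true) as A. pose proof (Wt_nonneg h k false) as B.
  pose proof invexp_bounds. pose proof (dd_bounds L).
  unfold g2, qq. destruct (nth k S false); simpl.
  - split; lra.
  - destruct (Nat.leb (Tc h k) L) eqn:E.
    + apply Nat.leb_le in E. destruct (unc_bound h k L E) as [U1 U2]. split; nra.
    + split; nra.
Qed.


Lemma counts h (S : list bool) n K L : length S = n -> n = (2 * K)%nat -> card S = K ->
  Forall (fun e => (fst e < n)%nat) h -> (2 * length h < K * (L + 1))%nat ->
  exists c, (2 * c < K)%nat /\
    (K - c <= cntn (fun k => nth k S false && Nat.leb (Tc h k) L) n)%nat /\
    (K - c <= cntn (fun k => negb (nth k S false) && Nat.leb (Tc h k) L) n)%nat.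
Proof.
  intros HS Hn Hc HF Hl.
  set (c := cntn (fun k => Nat.ltb L (Tc h k)) n).
  exists c.
  assert (Hc1 : (c * (L + 1) <= length h)%nat).
  { rewrite <- (sumk_Tc n h HF). apply cntn_sumk. }
  assert (Hmono : forall P : nat -> bool,
    (cntn (fun k => P k && negb (Nat.leb (Tc h k) L)) n <= c)%nat).
  { intros P. apply cntn_mono. intros k Hk. apply andb_prop in Hk. destruct Hk as [_ Hk].
    apply negb_true_iff, Nat.leb_gt in Hk. apply Nat.ltb_lt. auto. }
  assert (HK : card S = cntn (fun k => nth k S false) n) by (rewrite card_cntn, HS; auto).
  pose proof (cntn_split n (fun k => nth k S false) (fun k => Nat.leb (Tc h k) L)) as Sp1.
  pose proof (cntn_split n (fun k => negb (nth k S false)) (fun k => Nat.leb (Tc h k) L)) as Sp2.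
  pose proof (cntn_compl n (fun k => nth k S false)) as Cp.
  pose proof (Hmono (fun k => nth k S false)). pose proof (Hmono (fun k => negb (nth k S false))).
  simpl in *. split; [nia|]. split; lia.
Qed.

Lemma core pol n K L eps h (S : list bool) :
  valid_policy n pol -> n = (2 * K)%nat -> (0 < K)%nat ->
  Forall (fun e => (fst e < n)%nat) h -> (2 * length h < K * (L + 1))%nat ->
  length S = n ->
  (forall j, (K < 2 * j)%nat -> exp (eps * INR K / (2 * eta)) * (2 * qq L ^ j) <= / 1000) ->
  sumR (map (fun v => hprob (thv v) pol h * (if eps_topKb (thv v) n K eps S then 1 else 0)) (allvec n))
  <= / 1000 * sumR (map (fun v => hprob (thv v) pol h) (allvec n)).
Proof.
  intros Hv Hn HK HF Hl HS NUM.
  assert (Hth : forall v i, 0 <= thv v i <= 1) by (intros; unfold thv; pose proof (pv_bounds (nth i v false)); lra).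
  assert (Hhp : forall v, 0 <= hprob (thv v) pol h) by (intros; apply hprob_nonneg with n; auto).
  assert (Hsum0 : 0 <= sumR (map (fun v => hprob (thv v) pol h) (allvec n))) by (apply sumR_nonneg; auto).
  destruct (Nat.eq_dec (card S) K) as [Hc|Hc].
  2:{ rewrite (sumR_ext _ (fun _ => 0)).
      - replace (sumR (map (fun _ : list bool => 0) (allvec n))) with 0; [lra|].
        clear. induction (allvec n); simpl; auto. rewrite <- IHl. ring.
      - intros v _. unfold eps_topKb. apply Nat.eqb_neq in Hc. rewrite Hc. simpl. ring. }
  set (m0 := eps * INR K / (2 * eta)).
  assert (He : 0 < eta) by (rewrite eta_val; lra).
  assert (HKr : 0 < INR K) by (apply lt_0_INR; auto).
  assert (PW : forall v, In v (allvec n) ->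
     hprob (thv v) pol h * (if eps_topKb (thv v) n K eps S then 1 else 0) <=
     exp m0 * (hprob (thv v) pol h * lprod (g1 S) v + hprob (thv v) pol h * lprod (g2 S) v)).
  { intros v Hvin. apply allvec_len in Hvin.
    rewrite lprod_g1, lprod_g2 by lia. rewrite !invexp_pow.
    pose proof (exp_pos (- INR (lowIn S v))). pose proof (exp_pos (- INR (highOut S v))).
    pose proof (exp_pos m0). specialize (Hhp v).
    destruct (eps_topKb (thv v) n K eps S) eqn:E.
    - destruct (good_bound v S n K eps) as [_ G]; auto; try lia.
      assert (Hm : INR (Nat.min (lowIn S v) (highOut S v)) <= m0).
      { unfold m0. apply (Rmult_le_reg_l (2 * eta)); [lra|].
        replace (2 * eta * (eps * INR K / (2 * eta))) with (eps * INR K) by (field; lra). lra. }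
      assert (1 <= exp m0 * (exp (- INR (lowIn S v)) + exp (- INR (highOut S v)))).
      { destruct (Nat.min_spec (lowIn S v) (highOut S v)) as [[_ Em]|[_ Em]]; rewrite Em in Hm.
        - assert (1 <= exp m0 * exp (- INR (lowIn S v))).
          { rewrite <- exp_plus. pose proof (exp_ineq1_le (m0 + - INR (lowIn S v))). lra. } nra.
        - assert (1 <= exp m0 * exp (- INR (highOut S v))).
          { rewrite <- exp_plus. pose proof (exp_ineq1_le (m0 + - INR (highOut S v))). lra. } nra. }
      nra.
    - rewrite Rmult_0_r. apply Rmult_le_pos; [lra|]. nra. }
  eapply Rle_trans; [apply sumR_le; exact PW|].
  rewrite sumR_scal, sumR_plus, !sum_hprob_g by auto.
  rewrite (sum_hprob pol n h HF).
  destruct (counts h S n K L) as (c & Hc2 & Hj1 & Hj2); auto.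
  pose proof (prod_g1_bound h n L S) as B1. pose proof (prod_g2_bound h n L S) as B2.
  pose proof (qq_bounds L) as Hq.
  pose proof (pow_decr (qq L) _ _ Hq Hj1). pose proof (pow_decr (qq L) _ _ Hq Hj2).
  pose proof (prodn_Wt_nonneg h n). pose proof (Ah_nonneg pol n h Hv).
  specialize (NUM (K - c)%nat ltac:(lia)). fold m0 in NUM.
  set (P := prodn (Wt h) n) in *. set (Q := qq L ^ (K - c)) in *.
  set (A := Ah pol h) in *.
  assert (prodn (fun k b => Wt h k b * g1 S k b) n <= Q * P) by nra.
  assert (prodn (fun k b => Wt h k b * g2 S k b) n <= Q * P) by nra.
  pose proof (exp_pos m0).
  assert (A * prodn (fun k b => Wt h k b * g1 S k b) n + A * prodn (fun k b => Wt h k b * g2 S k b) n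
          <= A * (2 * Q * P)) by nra.
  assert (0 <= A * P) by nra.
  assert (exp m0 * (A * (2 * Q * P)) = (exp m0 * (2 * Q)) * (A * P)) by ring.
  nra.
Qed.


Lemma agg pol n K L eps m :
  valid_policy n pol -> n = (2 * K)%nat -> (0 < K)%nat -> (2 * m < K * (L + 1))%nat ->
  (forall j, (K < 2 * j)%nat -> exp (eps * INR K / (2 * eta)) * (2 * qq L ^ j) <= / 1000) ->
  sumR (map (fun v => succ_at (thv v) pol n K eps m) (allvec n)) <=
  / 1000 * sumR (map (fun v => stop (thv v) pol n m) (allvec n)).
Proof.
  intros Hv Hn HK Hm NUM.
  set (F := fun v h S => out pol h S * (hprob (thv v) pol h * (if eps_topKb (thv v) n K eps S then 1 else 0))).
  transitivity (sumR (map (fun h => sumR (map (fun S => out pol h S *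
     sumR (map (fun v => hprob (thv v) pol h * (if eps_topKb (thv v) n K eps S then 1 else 0)) (allvec n)))
     (allvec n))) (hist_all n m))).
  { right. unfold succ_at.
    rewrite (sumR_ext (fun v => sumR (map (fun h => hprob (thv v) pol h * sumR (map
       (fun S => if eps_topKb (thv v) n K eps S then out pol h S else 0) (allvec n))) (hist_all n m)))
       (fun v => sumR (map (fun h => sumR (map (fun S => F v h S) (allvec n))) (hist_all n m)))).
    2:{ intros v _. apply sumR_ext. intros h _. rewrite <- sumR_scal. apply sumR_ext. intros S _.
        unfold F. destruct (eps_topKb (thv v) n K eps S); ring. }
    rewrite (sumR_swap (fun v h => sumR (map (fun S => F v h S) (allvec n)))).
    apply sumR_ext. intros h _. rewrite (sumR_swap (fun v S => F v h S)).
    apply sumR_ext. intros S _. unfold F. rewrite sumR_scal. reflexivity. }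
  transitivity (sumR (map (fun h => sumR (map (fun S => out pol h S *
     (/ 1000 * sumR (map (fun v => hprob (thv v) pol h) (allvec n)))) (allvec n))) (hist_all n m))).
  { apply sumR_le. intros h Hh. apply sumR_le. intros S HS.
    apply Rmult_le_compat_l; [apply (Hv h)|].
    destruct (hist_all_prop n m h Hh) as [Hl HF].
    apply core with L; auto; [lia| apply allvec_len; auto]. }
  right. unfold stop. rewrite <- sumR_scal.
  rewrite (sumR_ext (fun v => / 1000 * sumR (map (fun h => hprob (thv v) pol h * sumR (map (out pol h) (allvec n))) (hist_all n m)))
     (fun v => sumR (map (fun h => / 1000 * (hprob (thv v) pol h * sumR (map (out pol h) (allvec n)))) (hist_all n m)))).
  2:{ intros v _. rewrite sumR_scal. reflexivity. }
  rewrite (sumR_swap (fun v h => / 1000 * (hprob (thv v) pol h * sumR (map (out pol h) (allvec n))))).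
  apply sumR_ext. intros h _.
  rewrite (sumR_ext (fun v => / 1000 * (hprob (thv v) pol h * sumR (map (out pol h) (allvec n))))
     (fun v => (/ 1000 * sumR (map (out pol h) (allvec n))) * hprob (thv v) pol h)) by (intros; ring).
  rewrite sumR_scal.
  rewrite (sumR_ext (fun S => out pol h S * (/ 1000 * sumR (map (fun v => hprob (thv v) pol h) (allvec n))))
     (fun S => (/ 1000 * sumR (map (fun v => hprob (thv v) pol h) (allvec n))) * out pol h S)) by (intros; ring).
  rewrite sumR_scal. ring.
Qed.

Lemma thv_family n v : in_family n (thv v).
Proof. intros i _. unfold thv, pv. destruct (nth i v false); auto. Qed.

Lemma thv_bounds v i : 0 <= thv v i <= 1.
Proof. unfold thv. pose proof (pv_bounds (nth i v false)). lra. Qed.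

Lemma reach0 th pol n : reach th pol n 0 = 1.
Proof. unfold reach. simpl. ring. Qed.

Lemma exists_good pol n K L eps M :
  valid_policy n pol -> n = (2 * K)%nat -> (0 < K)%nat -> (2 * M <= K * (L + 1))%nat ->
  (forall j, (K < 2 * j)%nat -> exp (eps * INR K / (2 * eta)) * (2 * qq L ^ j) <= / 1000) ->
  (forall theta, in_family n theta -> success_prob_ge theta pol n K eps (9 / 10)) ->
  exists v, In v (allvec n) /\ 9 / 10 - / 1000 <= reach (thv v) pol n M.
Proof.
  intros Hv Hn HK HM NUM Hsucc.
  set (G := fun v => sumR (map (succ_at (thv v) pol n K eps) (seq 0 M))).
  assert (H1 : forall v, 9 / 10 <= G v + reach (thv v) pol n M).
  { intros v. destruct (Rle_lt_dec (9/10) (G v + reach (thv v) pol n M)) as [|Hlt]; auto.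
    exfalso. destruct (Hsucc (thv v) (thv_family n v) _ Hlt) as [M' HM'].
    rewrite sum_f_R0_seq in HM'.
    pose proof (succ_partial (thv v) pol n Hv (thv_bounds v) K eps M (S M')). unfold G in *. lra. }
  assert (H2 : sumR (map G (allvec n)) <= / 1000 * INR (length (allvec n))).
  { unfold G. rewrite (sumR_swap (fun v m => succ_at (thv v) pol n K eps m)).
    transitivity (sumR (map (fun m => / 1000 * sumR (map (fun v => stop (thv v) pol n m) (allvec n))) (seq 0 M))).
    - apply sumR_le. intros m Hm. apply in_seq in Hm. apply agg with L; auto. lia.
    - rewrite sumR_scal. apply Rmult_le_compat_l; [lra|].
      rewrite <- (sumR_swap (fun v m => stop (thv v) pol n m)).
      transitivity (sumR (map (fun _ => 1) (allvec n))).
      + apply sumR_le. intros v _. pose proof (stop_seq (thv v) pol n Hv M 0) as E.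
        rewrite reach0 in E. pose proof (reach_nonneg (thv v) pol n Hv (thv_bounds v) (0 + M)).
        change (fun y => stop (thv v) pol n y) with (stop (thv v) pol n). lra.
      + right. clear. induction (allvec n) as [|a l IH]; [simpl; ring|].
        change (length (a::l)) with (S (length l)). rewrite S_INR, <- IH. simpl. ring. }
  assert (H3 : INR (length (allvec n)) * (9/10 - /1000) <= sumR (map (fun v => reach (thv v) pol n M) (allvec n))).
  { assert (INR (length (allvec n)) * (9/10) <= sumR (map (fun v => G v + reach (thv v) pol n M) (allvec n)))
      by (apply sumR_const_le; auto).
    rewrite sumR_plus in H. lra. }
  apply sumR_exists in H3; auto.
  intros E. assert (In (repeat false n) (allvec n)) by (apply allvec_in; apply repeat_length).
  rewrite E in H; contradiction.
Qed.


Lemma exp_le x y : x <= y -> exp x <= exp y.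
Proof. intros [H|H]; [left; apply exp_increasing; auto| subst; lra]. Qed.

Lemma exp_pow_INR y j : exp y ^ j = exp (y * INR j).
Proof.
  induction j; simpl pow. - simpl. rewrite Rmult_0_r, exp_0. reflexivity.
  - rewrite IHj, S_INR, <- exp_plus. f_equal. ring.
Qed.

Lemma floor_nat t : 0 <= t -> exists L : nat, INR L <= t < INR L + 1.
Proof.
  intros Ht. destruct (archimed t) as [H1 H2].
  assert (Hz : (0 < up t)%Z) by (apply lt_IZR; simpl; lra).
  exists (Z.to_nat (up t - 1)). rewrite INR_IZR_INZ, Z2Nat.id by lia.
  rewrite minus_IZR. simpl. lra.
Qed.

Lemma rr_le_e : rr <= exp 1.
Proof.
  pose proof exp1_gt2. unfold rr. rewrite eta_val.
  apply (Rmult_le_reg_r (1/2 - /10000)); [lra|].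
  unfold Rdiv at 1. rewrite Rmult_assoc, Rinv_l by lra. lra.
Qed.

Lemma exp60 : 2000 <= exp 60.
Proof.
  replace 60 with (20 + 20 + 20) by ring. rewrite !exp_plus.
  pose proof (exp_ineq1_le 20). assert (0 <= exp 20) by (left; apply exp_pos). nra.
Qed.

Lemma num_bound K eps L : (0 < K)%nat -> 0 < eps -> 1000 <= eps * INR K -> eps <= / 10000000000 ->
  INR L <= ln (1 / eps) / 2 ->
  forall j, (K < 2 * j)%nat -> exp (eps * INR K / (2 * eta)) * (2 * qq L ^ j) <= / 1000.
Proof.
  intros HK He HeK He1 HL j Hj.
  set (t := ln (1 / eps)) in *.
  assert (Et : exp t = 1 / eps) by (unfold t; apply exp_ln; apply Rdiv_lt_0_compat; lra).
  assert (Ht : 0 <= t).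
  { destruct (Rle_lt_dec 0 t) as [|Hlt]; auto. exfalso.
    pose proof (exp_increasing _ _ Hlt). rewrite exp_0, Et in H.
    assert (1 < 1 / eps).
    { unfold Rdiv. rewrite Rmult_1_l. rewrite <- Rinv_1 at 1. apply Rinv_lt_contravar; lra. }
    lra. }
  set (E := exp (t / 2)). set (u := exp (- (t / 2))).
  assert (HE1 : 1 <= E) by (unfold E; pose proof (exp_ineq1_le (t/2)); lra).
  assert (Hu : u = / E) by (unfold u, E; apply exp_Ropp).
  assert (Hu2 : u * u = eps).
  { unfold u. rewrite <- exp_plus. replace (- (t / 2) + - (t / 2)) with (- t) by field.
    rewrite exp_Ropp, Et. field. lra. }
  assert (Hup : 0 < u) by (unfold u; apply exp_pos).
  assert (Hu5 : u <= / 100000) by nra.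
  assert (HrL : rr ^ L <= E).
  { eapply Rle_trans. apply pow_incr. split; [pose proof rr_ge1; lra| apply rr_le_e].
    rewrite exp_pow_INR, Rmult_1_l. apply exp_le. lra. }
  assert (Hdd : u / 2 <= dd L).
  { unfold dd. rewrite Hu. apply Rle_trans with (/ (1 + E)).
    - unfold Rdiv. rewrite <- Rinv_mult. apply Rinv_le_contravar; lra.
    - apply Rinv_le_contravar; [pose proof rr_ge1; assert (1 <= rr ^ L) by (apply pow_R1_Rle; lra); lra| lra]. }
  pose proof invexp_bounds.
  assert (Hq : qq L <= exp (- (u / 4))).
  { eapply Rle_trans; [| apply (exp_ineq1_le (- (u / 4)))]. unfold qq. nra. }
  pose proof (qq_bounds L) as Hqb.
  assert (Hqj : qq L ^ j <= exp (- (u / 4) * INR j)).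
  { rewrite <- exp_pow_INR. apply pow_incr. lra. }
  assert (HjK : INR K < 2 * INR j).
  { replace 2 with (INR 2) by reflexivity. rewrite <- mult_INR. apply lt_INR. lia. }
  assert (HKpos : 0 < INR K) by (apply lt_0_INR; auto).
  assert (Hqj2 : qq L ^ j <= exp (- (u * INR K / 8))) by
    (eapply Rle_trans; [exact Hqj| apply exp_le; nra]).
  replace (eps * INR K / (2 * eta)) with (5000 * (u * u) * INR K) by (rewrite Hu2, eta_val; field).
  assert (Hexp : exp (5000 * (u * u) * INR K) * exp (- (u * INR K / 8)) <= exp (- 60)).
  { rewrite <- exp_plus. apply exp_le.
    assert (5000 * (u * u) <= u / 16) by nra.
    assert (u * u * INR K <= u * INR K) by nra.
    rewrite <- Hu2 in HeK. nra. }
  assert (E60 : exp (- 60) = / exp 60) by apply exp_Ropp. pose proof exp60.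
  assert (/ exp 60 <= / 2000) by (apply Rinv_le_contravar; lra).
  pose proof (exp_pos (5000 * (u * u) * INR K)).
  assert (exp (5000 * (u * u) * INR K) * (2 * qq L ^ j) <= 2 * (exp (5000 * (u * u) * INR K) * exp (- (u * INR K / 8)))) by nra.
  lra.
Qed.


Theorem theorem3 :
  exists c0 c1 c2 : R, 0 < c0 /\ 0 < c1 /\ 0 < c2 /\
  forall (K : nat) (eps : R),
    (1 <= K)%nat -> c0 / INR K <= eps -> eps <= c1 ->
    forall pol : policy,
      valid_policy (2 * K) pol ->
      (forall theta, in_family (2 * K) theta ->
         success_prob_ge theta pol (2 * K) K eps (9 / 10)) ->
      exists theta, in_family (2 * K) theta /\
        expected_pulls_ge theta pol (2 * K) (c2 * INR (2 * K) * ln (1 / eps)).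
Proof.
  exists 1000, (/ 10000000000), (/ 20).
  split; [lra|]. split; [lra|]. split; [lra|].
  intros K eps HK H0 H1 pol Hv Hsucc.
  assert (HKr : 1 <= INR K) by (replace 1 with (INR 1) by reflexivity; apply le_INR; auto).
  assert (HeK : 1000 <= eps * INR K).
  { apply (Rmult_le_compat_r (INR K)) in H0; [|lra].
    unfold Rdiv in H0. rewrite Rmult_assoc, Rinv_l in H0 by lra. lra. }
  assert (He : 0 < eps) by nra.
  set (t := ln (1 / eps)).
  assert (Et : exp t = 1 / eps) by (unfold t; apply exp_ln; apply Rdiv_lt_0_compat; lra).
  assert (Ht4 : 4 <= t).
  { destruct (Rle_lt_dec 4 t) as [|Hlt]; auto. exfalso.
    pose proof (exp_increasing _ _ Hlt). rewrite Et in H.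
    assert (exp 4 <= 81).
    { replace 4 with (1 + 1 + 1 + 1) by ring. rewrite !exp_plus. pose proof exp_le_3.
      pose proof (exp_pos 1). assert (exp 1 * exp 1 <= 9) by nra. nra. }
    assert (10000000000 <= 1 / eps).
    { unfold Rdiv. rewrite Rmult_1_l. rewrite <- (Rinv_inv 10000000000).
      apply Rinv_le_contravar; lra. }
    lra. }
  destruct (floor_nat (t / 2)) as [L [HL1 HL2]]; [lra|].
  set (M := Nat.div (K * (L + 1)) 2).
  assert (HM1 : (2 * M <= K * (L + 1))%nat).
  { unfold M. pose proof (Nat.div_mod_eq (K * (L + 1)) 2). lia. }
  assert (HM2 : (K * (L + 1) <= 2 * M + 1)%nat).
  { unfold M. pose proof (Nat.div_mod_eq (K * (L + 1)) 2).
    pose proof (Nat.mod_upper_bound (K * (L + 1)) 2). lia. }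
  assert (HL : (2 <= L)%nat).
  { destruct (Nat.le_gt_cases 2 L) as [|Hl]; auto. exfalso.
    assert (INR L <= 1) by (replace 1 with (INR 1) by reflexivity; apply le_INR; lia). lra. }
  destruct (exists_good pol (2 * K) K L eps M Hv eq_refl ltac:(lia) HM1
     (num_bound K eps L ltac:(lia) He HeK H1 ltac:(unfold t in HL1; lra)) Hsucc) as [v [_ Hr]].
  exists (thv v). split; [apply thv_family|].
  intros b Hb. exists (M - 1)%nat.
  rewrite sum_f_R0_seq. replace (S (M - 1)) with M by lia.
  assert (Hth := thv_bounds v).
  assert (Hs : INR (length (seq 0 M)) * reach (thv v) pol (2 * K) M <=
               sumR (map (fun m => reach (thv v) pol (2 * K) (S m)) (seq 0 M))).
  { apply sumR_const_le. intros x Hx. apply in_seq in Hx.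
    replace M with (S x + (M - S x))%nat at 1 by lia. apply reach_mono; auto. }
  rewrite seq_length in Hs.
  assert (HMr : INR K * (INR L + 1) <= 2 * INR M + 1).
  { replace (INR L + 1) with (INR (L + 1)) by (rewrite plus_INR; reflexivity).
    rewrite <- mult_INR. replace (2 * INR M + 1) with (INR (2 * M + 1))
      by (rewrite plus_INR, mult_INR; reflexivity). apply le_INR; auto. }
  assert (INR K * (t / 2) <= INR K * (INR L + 1)) by nra.
  rewrite mult_INR in Hb. simpl (INR 2) in Hb. fold t in Hb.
  assert (HMpos : 0 <= INR M) by apply pos_INR.
  nra.
Qed.
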